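(* Let $L$ be a subspace of $\bigwedge^{k}V$ and $j\leq n$, and let $K$ be the largest subspace of $\bigwedge^{k-1}V^{(j)}$ such that $e_j\wedge K\subseteq L$. Suppose $L$ is monomial with respect to $e_j$, i.e. $L=\big(L\cap\bigwedge^{k}V^{(j)}\big)\oplus\big(L\cap(e_{j}\wedge\bigwedge^{k-1}V^{(j)})\big)$, and let $1\leq i<j$. Then \[ N_{j\to i}L=\left(\Big(L\cap\bigwedge^{k}V^{(j)}\Big)+\left(e_{i}\wedge K\right)\right)\oplus\left(e_{j}\wedge K'\right), \] where $K'$ is the largest subspace of $K$ such that $e_{i}\wedge K'\subseteq L$.
   Context: $\mathbb{F}$ is a field (assumed throughout the paper, for expository purposes, to have characteristic not $2$), $V$ is an $n$-dimensional $\mathbb{F}$-vector space with a fixed basis $e_1,\dots,e_n$, and $\bigwedge V$ its exterior algebra. For $j\in[n]$, $V^{(j)}$ is the span of $\{e_h:h\neq j\}$, and $\bigwedge V^{(j)}$ is viewed as a subalgebra of $\bigwedge V$. Slow shift: for distinct $i,j\in[n]$ and nonzero $m\in\bigwedge^kV$, write uniquely $m=x+e_j\wedge y$ with $x\in\bigwedge^kV^{(j)}$, $y\in\bigwedge^{k-1}V^{(j)}$, and set $N_{j\to i}m=x+e_i\wedge y$ if this is nonzero, and $N_{j\to i}m=e_j\wedge y$ otherwise (the limit as $t\to0$ of the projective action of the linear map $e_j\mapsto e_i+te_j$ fixing the other $e_h$). For a subspace $L$ of $\bigwedge^kV$, $N_{j\to i}L$ is the span of $\{N_{j\to i}m:m\in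 L\setminus\{0\}\}$; it has the same dimension as $L$. *)

(* Defs.v *)
From HB Require Import structures.
From mathcomp Require Import all_boot all_order all_algebra.
Set Implicit Arguments. Unset Strict Implicit. Unset Printing Implicit Defensive.
Import GRing.Theory.
Local Open Scope ring_scope.

(* Exterior algebra of V = F^n with basis e_0,...,e_{n-1} (0-based indices
   'I_n for the paper's e_1..e_n).  An element of /\V is given by its
   coordinates on the monomial basis e_S = e_{s1} /\ ... /\ e_{sk}
   (s1 < ... < sk), A ranging over subsets of 'I_n. *)
Section Exterior.
Variables (F : fieldType) (n : nat).

Definition ext := {ffun {set 'I_n} -> F^o}.

Definition mono (A : {set 'I_n}) : ext := [ffun T => (T == A)%:R].
Definition vec (i : 'I_n) : ext := mono [set i].

(* number of inversions when concatenating the increasing words A and T *)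
Definition inv_count (A T : {set 'I_n}) : nat :=
  #|[set p : 'I_n * 'I_n | [&& p.1 \in A, p.2 \in T & (p.2 < p.1)%N]]|.

(* e_S /\ e_T = 0 if A,T intersect, else (-1)^{inv} e_{A u T}; extended
   bilinearly *)
Definition wedge (x y : ext) : ext :=
  [ffun U => \sum_(A : {set 'I_n}) \sum_(T : {set 'I_n})
      if [disjoint A & T] && (A :|: T == U)
      then (-1) ^+ inv_count A T * x A * y T else 0].

Definition wedge_by (v : ext) : 'End(ext) := linfun (wedge v).

Definition extpow (k : nat) : {vspace ext} :=
  <<[seq mono A | A <- enum [set A : {set 'I_n} | #|A| == k]]>>%VS.

(* /\^k V^(j), V^(j) = span of e_h, h <> j *)
Definition extpow_off (j : 'I_n) (k : nat) : {vspace ext} :=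
  <<[seq mono A | A <- enum [set A : {set 'I_n} | (#|A| == k) && (j \notin A)]]>>%VS.

Definition ss_decomp (j : 'I_n) (k : nat) (m x y : ext) : Prop :=
  [/\ x \in extpow_off j k, y \in extpow_off j k.-1 & m = x + wedge (vec j) y].

(* value of the slow shift N_{j->i} m given the decomposition *)
Definition ss_val (i j : 'I_n) (x y : ext) : ext :=
  if x + wedge (vec i) y != 0 then x + wedge (vec i) y else wedge (vec j) y.

Definition ss_image (i j : 'I_n) (k : nat) (L : {vspace ext}) (m' : ext) : Prop :=
  exists m x y, [/\ m \in L, m != 0, ss_decomp j k m x y & m' = ss_val i j x y].

Definition is_span (W : {vspace ext}) (P : ext -> Prop) : Prop :=
  (forall v, P v -> v \in W) /\
  (forall U : {vspace ext}, (forall v, P v -> v \in U) -> (W <= U)%VS).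

End Exterior.

(* Main.v *)
Require Import Defs.
From HB Require Import structures.
From mathcomp Require Import all_boot all_order all_algebra.
Import GRing.Theory.
Local Open Scope ring_scope.

Section Aux.
Variables (F : fieldType) (n : nat).
Local Notation ext := (ext F n).

Lemma wedge_lin (v : ext) : linear (wedge v).
Proof.
move=> a x y; apply/ffunP => U; rewrite !ffunE.
rewrite scaler_sumr -big_split; apply: eq_bigr => A _.
rewrite scaler_sumr -big_split; apply: eq_bigr => T _.
case: ifP => _ /=; last by rewrite scaler0 addr0.
rewrite /GRing.scale /= !ffunE /=.
change (a *: x T) with (a * x T).
by rewrite mulrDr mulrCA.
Qed.

HB.instance Definition _ (v : ext) :=
  GRing.isLinear.Build F ext ext *:%R (wedge v) (wedge_lin v).

Lemma wbE (v u : ext) : wedge_by v u = wedge v u.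
Proof. by rewrite /wedge_by lfunE. Qed.

Definition Zj (j : 'I_n) (z : ext) := forall A : {set 'I_n}, j \in A -> z A = 0.

Lemma span_coord0 (X : seq ext) (A : {set 'I_n}) :
  (forall x, x \in X -> x A = 0) -> forall z, z \in <<X>>%VS -> z A = 0.
Proof.
move=> hX z hz.
rewrite (coord_span (X := in_tuple X) hz) sum_ffunE.
apply: big1 => i _; rewrite ffunE.
rewrite hX ?scaler0 //.
by apply: mem_nth; apply: ltn_ord.
Qed.

Lemma P1 j d z : z \in extpow_off F j d -> Zj j z.
Proof.
move=> hz A jA; apply: (@span_coord0 _ A _ z hz) => x /mapP [B].
rewrite mem_enum inE => /andP [_ jB] ->.
rewrite ffunE; case: eqP => // hBA.
by move: jB; rewrite -hBA jA.
Qed.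

Lemma vecE (j : 'I_n) A : vec F j A = (A == [set j])%:R.
Proof. by rewrite ffunE. Qed.

Lemma P2 (j : 'I_n) y (U : {set 'I_n}) : j \notin U -> wedge (vec F j) y U = 0.
Proof.
move=> jU; rewrite ffunE; apply: big1 => A _; apply: big1 => T _.
case: ifP => // /andP [_ /eqP hU]; rewrite vecE; case: eqP => [hA|_].
  by move: jU; rewrite -hU hA inE set11.
by rewrite mulr0 mul0r.
Qed.

Lemma P3 (i j : 'I_n) y : i != j -> Zj j y -> Zj j (wedge (vec F i) y).
Proof.
move=> ij hy U jU; rewrite ffunE; apply: big1 => A _; apply: big1 => T _.
case: ifP => // /andP [_ /eqP hU]; rewrite vecE; case: eqP => [hA|_].
  rewrite hy ?mulr0 //.
  move: jU; rewrite -hU hA !inE => /orP [/eqP ji|//].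
  by move: ij; rewrite ji eqxx.
by rewrite mulr0 mul0r.
Qed.

Lemma Dj (j : 'I_n) z w : Zj j z -> z = wedge (vec F j) w -> z = 0.
Proof.
move=> hz ew; apply/ffunP => U; rewrite [RHS]ffunE.
case: (boolP (j \in U)) => jU; first exact: hz.
by rewrite ew P2.
Qed.

Lemma Inj_coord (j : 'I_n) y (T : {set 'I_n}) : j \notin T ->
  wedge (vec F j) y (j |: T) = (-1) ^+ inv_count [set j] T * y T.
Proof.
move=> jT; rewrite ffunE (bigD1 [set j]) //= [X in _ + X]big1 ?addr0; last first.
  move=> A hA; apply: big1 => T' _; case: ifP => // _.
  by rewrite vecE (negbTE hA) mulr0 mul0r.
rewrite (bigD1 T) //= [X in _ + X]big1 ?addr0; last first.
  move=> T' hT'; case: ifP => // /andP [hd /eqP hu].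
  exfalso; move/negP: hT'; apply; apply/eqP/setP => x.
  move/setP: hu => /(_ x); rewrite !inE.
  case: (eqVneq x j) => [->|] //= _.
  move: hd; rewrite disjoints1 => hd; rewrite (negbTE jT).
  exact: negbTE.
by rewrite disjoints1 jT eqxx /= vecE eqxx mulr1.
Qed.

Lemma Inj (j : 'I_n) y : Zj j y -> wedge (vec F j) y = 0 -> y = 0.
Proof.
move=> hy h0; apply/ffunP => T; rewrite [RHS]ffunE.
case: (boolP (j \in T)) => jT; first exact: hy.
have := @Inj_coord j y T jT; rewrite h0 ffunE => /esym /eqP.
by rewrite mulf_eq0 signr_eq0 /= => /eqP.
Qed.

Lemma ZjD (j : 'I_n) z1 z2 : Zj j z1 -> Zj j z2 -> Zj j (z1 + z2).
Proof. by move=> h1 h2 A jA; rewrite !ffunE /= h1 // h2 // addr0. Qed.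

Lemma ZjN (j : 'I_n) z : Zj j z -> Zj j (- z).
Proof. by move=> h1 A jA; rewrite !ffunE /= h1 // oppr0. Qed.

End Aux.

Theorem lemma3p5 (F : fieldType) (n k : nat) (i j : 'I_n)
    (L K K' : {vspace ext F n}) :
  (2%:R != 0 :> F) ->
  (L <= extpow F n k)%VS ->
  (* K is the largest subspace of /\^(k-1) V^(j) with e_j /\ K <= L *)
  (K <= extpow_off F j k.-1)%VS ->
  (wedge_by (vec F j) @: K <= L)%VS ->
  (forall U : {vspace ext F n}, (U <= extpow_off F j k.-1)%VS ->
     (wedge_by (vec F j) @: U <= L)%VS -> (U <= K)%VS) ->
  (* L is monomial with respect to e_j *)
  L = (L :&: extpow_off F j k + L :&: (wedge_by (vec F j) @: extpow_off F j k.-1))%VS ->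
  (i < j)%N ->
  (* K' is the largest subspace of K with e_i /\ K' <= L *)
  (K' <= K)%VS ->
  (wedge_by (vec F i) @: K' <= L)%VS ->
  (forall U : {vspace ext F n}, (U <= K)%VS ->
     (wedge_by (vec F i) @: U <= L)%VS -> (U <= K')%VS) ->
  is_span ((L :&: extpow_off F j k + wedge_by (vec F i) @: K) + wedge_by (vec F j) @: K')%VS
          (ss_image i j k L)
  /\ ((L :&: extpow_off F j k + wedge_by (vec F i) @: K) :&: (wedge_by (vec F j) @: K'))%VS = 0%VS.
Proof.
move=> h2 hLk hKoff hjK hKmax hmono hij hK'K hiK' hK'max.
have ij : i != j by apply/eqP => e; move: hij; rewrite e ltnn.
have Kchar : forall y, y \in extpow_off F j k.-1 -> wedge (vec F j) y \in L -> y \in K.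
  move=> y hy hyL; have := hKmax (K + <[y]>)%VS.
  rewrite subv_add hKoff -memvE hy limgD limg_line subv_add hjK -memvE wbE hyL.
  move=> /(_ isT isT) hsub; apply: (subvP hsub); apply: (subvP (addvSr K _)).
  exact: memv_line.
have K'char : forall y, y \in K -> wedge (vec F i) y \in L -> y \in K'.
  move=> y hy hyL; have := hK'max (K' + <[y]>)%VS.
  rewrite subv_add hK'K -memvE hy limgD limg_line subv_add hiK' -memvE wbE hyL.
  move=> /(_ isT isT) hsub; apply: (subvP hsub); apply: (subvP (addvSr K' _)).
  exact: memv_line.
have decompL : forall m, m \in L -> exists a y', [/\ a \in L, a \in extpow_off F j k,
     y' \in extpow_off F j k.-1 & m = a + wedge (vec F j) y'].
  move=> m hm; move: hm; rewrite {1}hmono => /memv_addP [a ha [b hb ->]].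
  move/memv_capP: ha => [haL haO]; move/memv_capP: hb => [hbL /memv_imgP [y' hy' eb]].
  by exists a, y'; split => //; rewrite eb wbE.
have uniq : forall m x y, m \in L -> ss_decomp j k m x y ->
    [/\ x \in L, wedge (vec F j) y \in L & y \in K].
  move=> m x y hm [hx hy em].
  have [a [y' [haL haO hy' ema]]] := decompL m hm.
  have hxa : x - a = 0.
    apply: (@Dj _ _ j _ (y' - y)); first by apply: (@P1 _ _ j k); exact: memvB.
    rewrite -!wbE linearB /= !wbE.
    have e : x + wedge (vec F j) y = a + wedge (vec F j) y' by rewrite -em -ema.
    rewrite -[x](addrK (wedge (vec F j) y)) e.
    by rewrite -!addrA addrC !addrA subrK.
  have xa : x = a by apply/eqP; rewrite -subr_eq0 hxa.
  have wyL : wedge (vec F j) y \in L.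
    have -> : wedge (vec F j) y = m - x by rewrite em addrC addKr.
    by rewrite memvB // xa.
  by split => //; [rewrite xa | exact: Kchar].
have Koff : forall y, y \in K -> Zj F n j y.
  by move=> y hy; apply: (@P1 _ _ j k.-1); exact: (subvP hKoff).
split; last first.
  apply/eqP; rewrite -subv0; apply/subvP => v /memv_capP [h1 /memv_imgP [y hy ev]].
  rewrite ev memv0; apply/eqP.
  move/memv_addP: h1 => [a ha [b /memv_imgP [y2 hy2 ->] e]].
  apply: (@Dj _ _ j _ y); last by rewrite wbE.
  rewrite -ev e wbE; apply: ZjD.
    apply: (@P1 _ _ j k); by move/memv_capP: ha => [].
  by apply: P3 => //; apply: Koff.
split.
  move=> v [m [x [y [hm hm0 hd ->]]]].
  have [hxL hwyL hyK] := uniq m x y hm hd.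
  rewrite /ss_val; case: ifP => [_|/negbFE /eqP e0].
    apply: (subvP (addvSl _ _)); apply: memv_add.
      by apply/memv_capP; split => //; case: hd.
    by rewrite -wbE memv_img.
  apply: (subvP (addvSr _ _)); rewrite -wbE; apply: memv_img; apply: K'char => //.
  have -> : wedge (vec F i) y = - x by apply/eqP; rewrite -addr_eq0 addrC e0.
  by rewrite memvN.
move=> U hU; rewrite !subv_add -andbA; apply/and3P; split.
- apply/subvP => v hv; case: (eqVneq v 0) => [->|nz]; first exact: mem0v.
  apply: hU; exists v, v, 0; split => //.
  + by case/memv_capP: hv.
  + split; [by case/memv_capP: hv | exact: mem0v | by rewrite -wbE linear0 addr0].
  + by rewrite /ss_val -wbE linear0 addr0 nz.
- apply/subvP => v /memv_imgP [y hy ->].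
  case: (eqVneq (wedge_by (vec F i) y) 0) => [->|nz]; first exact: mem0v.
  apply: hU; exists (wedge_by (vec F j) y), 0, y; split.
  + exact: (subvP hjK _ (memv_img _ hy)).
  + apply/eqP => e; move/eqP: nz; apply.
    have y0 : y = 0 by apply: (@Inj _ _ j); [exact: Koff | rewrite -wbE].
    by rewrite y0 linear0.
  + split; [exact: mem0v | exact: (subvP hKoff) | by rewrite add0r wbE].
  + by rewrite /ss_val add0r -wbE nz.
- apply/subvP => v /memv_imgP [y hy ->].
  case: (eqVneq (wedge_by (vec F j) y) 0) => [->|nz]; first exact: mem0v.
  have yK : y \in K by exact: (subvP hK'K).
  have hiL : wedge_by (vec F i) y \in L := subvP hiK' _ (memv_img _ hy).
  have [a [y' [haL haO hy' ema]]] := decompL _ hiL.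
  have fia : wedge_by (vec F i) y = a.
    apply/eqP; rewrite -subr_eq0; apply/eqP.
    apply: (@Dj _ _ j _ y'); last by rewrite ema addrC addKr.
    apply: ZjD; last by apply: ZjN; exact: (@P1 _ _ j k).
    by rewrite wbE; apply: P3 => //; exact: Koff.
  apply: hU; exists (wedge_by (vec F j) y - wedge_by (vec F i) y), (- a), y; split.
  + by rewrite memvB //; exact: (subvP hjK _ (memv_img _ yK)).
  + apply/eqP => e; move/eqP: nz; apply.
    have e' := subr0_eq e.
    apply: (@Dj _ _ j _ y); last by rewrite wbE.
    by rewrite e' wbE; apply: P3 => //; exact: Koff.
  + split; [by rewrite memvN | exact: (subvP hKoff) | by rewrite fia addrC wbE].
  + by rewrite /ss_val -wbE fia addNr eqxx /= wbE.
Qed.
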